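(* Let $M$ be a graded generalized Eulerian $A_n(K)$-module which is finitely generated as an $R$-module. Then either $M=0$ or $M\cong R^m$ (as graded $R$-modules, with all free generators in degree $0$) for some $m\ge1$.
   Context: $K$ is a field of characteristic zero, $R=K[X_1,\dots,X_n]$ standard graded, $A_n(K)$ the Weyl algebra graded by $\deg X_i=1$, $\deg\partial_i=-1$; $\mathcal E_n=\sum_iX_i\partial_i$; $|z|$ is the degree of homogeneous $z$. A graded left $A_n(K)$-module $M$ is generalized Eulerian if for every homogeneous $z\in M$ there is $a\ge1$ with $(\mathcal E_n-|z|)^az=0$. *)

(* Defs.v *)
From HB Require Import structures.
From mathcomp Require Import all_boot all_order all_algebra.
Set Implicit Arguments. Unset Strict Implicit. Unset Printing Implicit Defensive.
Import Order.TTheory GRing.Theory Num.Theory.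
Local Open Scope ring_scope.

(* A left A_n(K)-module structure on the K-vector space M is given by the
   actions X i (multiplication by X_i) and D i (action of \partial_i),
   which are K-linear and satisfy the Weyl algebra relations. *)
Definition weyl_action (K : fieldType) (M : lmodType K) (n : nat)
    (X D : 'I_n -> M -> M) : Prop :=
  [/\ forall i, linear (X i), forall i, linear (D i),
      forall i j v, X i (X j v) = X j (X i v),
      forall i j v, D i (D j v) = D j (D i v) &
      forall i j v, D i (X j v) - X j (D i v) = (if i == j then v else 0)].

(* Grading: G d is the degree-d homogeneous component M_d (a subspace);
   M is the direct sum of the M_d, d : int. *)
Definition graded (K : fieldType) (M : lmodType K) (G : int -> M -> Prop) : Prop :=
  [/\ forall d, G d 0,
      forall d u v, G d u -> G d v -> G d (u + v),
      forall d (a : K) v, G d v -> G d (a *: v),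
      forall v, exists (s : seq int) (z : int -> M),
          (forall d, d \in s -> G d (z d)) /\ v = \sum_(d <- s) z d &
      forall (s : seq int) (z : int -> M), uniq s ->
          (forall d, d \in s -> G d (z d)) -> \sum_(d <- s) z d = 0 ->
          forall d, d \in s -> z d = 0].

Definition graded_action (K : fieldType) (M : lmodType K) (n : nat)
    (X D : 'I_n -> M -> M) (G : int -> M -> Prop) : Prop :=
  (forall i d v, G d v -> G (d + 1) (X i v)) /\
  (forall i d v, G d v -> G (d - 1) (D i v)).

Definition euler (K : fieldType) (M : lmodType K) (n : nat)
    (X D : 'I_n -> M -> M) (v : M) : M :=
  \sum_(i < n) X i (D i v).

Definition gen_eulerian (K : fieldType) (M : lmodType K) (n : nat)
    (X D : 'I_n -> M -> M) (G : int -> M -> Prop) : Prop :=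
  forall (d : int) (z : M), G d z ->
    exists a : nat, (0 < a)%N /\
      iter a (fun w => euler X D w - d%:~R *: w) z = 0.

Definition xmono (K : fieldType) (M : lmodType K) (n : nat)
    (X : 'I_n -> M -> M) (alpha : {ffun 'I_n -> nat}) (v : M) : M :=
  foldr (fun i w => iter (alpha i) (X i) w) v (enum 'I_n).

Definition in_Rspan (K : fieldType) (M : lmodType K) (n m : nat)
    (X : 'I_n -> M -> M) (g : 'I_m -> M) (v : M) : Prop :=
  exists (s : seq ({ffun 'I_n -> nat} * 'I_m))
         (c : {ffun 'I_n -> nat} * 'I_m -> K),
    v = \sum_(k <- s) c k *: xmono X k.1 (g k.2).

Definition fin_gen_R (K : fieldType) (M : lmodType K) (n : nat)
    (X : 'I_n -> M -> M) : Prop :=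
  exists (m : nat) (g : 'I_m -> M), forall v, in_Rspan X g v.

(* the family e : 'I_m -> M is an R-basis of M, i.e. the map R^m -> M,
   (p_j)_j |-> \sum_j p_j e_j, is an isomorphism of R-modules: the elements
   X^alpha e_j are K-linearly independent and span M. *)
Definition R_basis (K : fieldType) (M : lmodType K) (n m : nat)
    (X : 'I_n -> M -> M) (e : 'I_m -> M) : Prop :=
  (forall v, in_Rspan X e v) /\
  (forall (s : seq ({ffun 'I_n -> nat} * 'I_m))
          (c : {ffun 'I_n -> nat} * 'I_m -> K),
      uniq s -> \sum_(k <- s) c k *: xmono X k.1 (e k.2) = 0 ->
      forall k, k \in s -> c k = 0).

(* Main.v *)
Require Import Defs.
From HB Require Import structures.
From mathcomp Require Import all_boot all_order all_algebra zify.
From Stdlib Require Import Classical.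
Import GRing.Theory Num.Theory.
Local Open Scope ring_scope.

Section Lin.
Context {K : fieldType} {M : lmodType K}.
Implicit Types (f g : M -> M).

Lemma linD {f} {u v : M} : linear f -> f (u + v) = f u + f v.
Proof. by move=> Hf; have := Hf 1 u v; rewrite !scale1r. Qed.
Lemma lin0 {f} : linear f -> f 0 = 0.
Proof. move=> Hf; have h := @linD f 0 0 Hf; rewrite addr0 in h.
by move/(congr1 (fun x => x - f 0)): h; rewrite addrK subrr. Qed.
Lemma linZ {f} {a} {u : M} : linear f -> f (a *: u) = a *: f u.
Proof. by move=> Hf; have := Hf a u 0; rewrite !addr0 (lin0 Hf) addr0. Qed.
Lemma linN {f} {u : M} : linear f -> f (- u) = - f u.
Proof. move=> Hf; by rewrite -scaleN1r (linZ Hf) scaleN1r. Qed.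
Lemma linB {f} {u v : M} : linear f -> f (u - v) = f u - f v.
Proof. by move=> Hf; rewrite (linD Hf) (linN Hf). Qed.
Lemma linS {f} {I : Type} {r : seq I} {P : pred I} {F : I -> M} : linear f ->
  f (\sum_(i <- r | P i) F i) = \sum_(i <- r | P i) f (F i).
Proof. move=> Hf; apply: (big_morph f (fun u v => linD Hf) (lin0 Hf)). Qed.
Lemma lin_comp f g : linear f -> linear g -> linear (f \o g).
Proof. by move=> Hf Hg a u v /=; rewrite Hg Hf. Qed.
Lemma lin_iter f k : linear f -> linear (iter k f).
Proof. by move=> Hf; elim: k => [|k IH] a u v //= ; rewrite IH Hf. Qed.
Lemma lin_add f g : linear f -> linear g -> linear (fun v => f v + g v).
Proof. by move=> Hf Hg a u v; rewrite Hf Hg scalerDr addrACA. Qed.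
Lemma lin_scale f c : linear f -> linear (fun v => c *: f v).
Proof. by move=> Hf a u v; rewrite Hf scalerDr !scalerA mulrC. Qed.
Lemma lin_id : linear (@id M).
Proof. by []. Qed.
Lemma lin_sum (I : Type) (r : seq I) (F : I -> M -> M) :
  (forall i, linear (F i)) -> linear (fun v => \sum_(i <- r) F i v).
Proof.
move=> HF; elim: r => [|i r IH] a u v.
  by rewrite !big_nil scaler0 addr0.
by rewrite !big_cons HF IH scalerDr addrACA.
Qed.
End Lin.

Lemma sum_partition (V : nmodType) (I T : eqType) (t : seq I) (f : I -> T)
   (S : seq T) (F : I -> V) :
  uniq S -> (forall x, x \in t -> f x \in S) ->
  \sum_(e <- S) \sum_(x <- t | f x == e) F x = \sum_(x <- t) F x.
Proof.
move=> US Ht.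
under eq_bigr do rewrite big_mkcond.
rewrite exchange_big /= big_seq [RHS]big_seq; apply: eq_bigr => x xt.
rewrite (bigD1_seq (f x)) ?Ht //= eqxx big1 ?addr0 // => e /negbTE ne.
by rewrite eq_sym ne.
Qed.

Section Main.
Variables (K : fieldType) (n : nat) (M : lmodType K)
  (X D : 'I_n -> M -> M) (G : int -> M -> Prop).
Hypotheses (Hch : [pchar K] =i pred0) (HW : weyl_action X D) (HG : graded G)
  (HA : graded_action X D G).

Lemma G0 d : G d 0. Proof. by case: HG. Qed.
Lemma GD d u v : G d u -> G d v -> G d (u + v). Proof. by case: HG => _ h _ _ _; apply: h. Qed.
Lemma GZ d a v : G d v -> G d (a *: v). Proof. by case: HG => _ _ h _ _; apply: h. Qed.
Lemma GN d v : G d v -> G d (- v). Proof. by move=> h; rewrite -scaleN1r; apply: GZ. Qed.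
Lemma GB d u v : G d u -> G d v -> G d (u - v). Proof. by move=> h1 h2; apply: GD => //; apply: GN. Qed.
Lemma Gsum d (I : Type) (r : seq I) (P : pred I) (F : I -> M) :
  (forall i, P i -> G d (F i)) -> G d (\sum_(i <- r | P i) F i).
Proof. move=> h; apply: (big_ind (G d)) => //; [exact: G0 | exact: GD]. Qed.

Lemma proj d z (t : seq (int * M)) : (forall x, x \in t -> G x.1 x.2) -> G d z ->
  z = \sum_(x <- t) x.2 -> z = \sum_(x <- t | x.1 == d) x.2.
Proof.
move=> Ht Gz zE.
pose S := undup (d :: map fst t).
pose w e := \sum_(x <- t | x.1 == e) x.2 - (if e == d then z else 0).
have Gw : forall e, e \in S -> G e (w e).
  move=> e _; apply: GB.
    by rewrite big_seq_cond; apply: Gsum => x /andP[xt /eqP <-]; exact: Ht.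
  by case: eqP => [->|_]; [exact: Gz | exact: G0].
have US : uniq S by exact: undup_uniq.
have w0 : \sum_(e <- S) w e = 0.
  rewrite sumrB sum_partition //; last first.
    by move=> x xt; rewrite mem_undup inE map_f ?orbT.
  rewrite (bigD1_seq d) ?mem_undup ?mem_head //= eqxx.
  rewrite [X in z + X]big1 ?addr0 -?zE ?subrr //.
  by move=> e /negbTE ->.
have dS : d \in S by rewrite mem_undup mem_head.
case: HG => _ _ _ _ /(_ S w US Gw w0 d dS).
by rewrite /w eqxx => /subr0_eq ->.
Qed.


Lemma LX i : linear (X i). Proof. by case: HW. Qed.
Lemma LD i : linear (D i). Proof. by case: HW. Qed.
Lemma XXc i j v : X i (X j v) = X j (X i v). Proof. by case: HW => _ _ h _ _; apply: h. Qed.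
Lemma DDc i j v : D i (D j v) = D j (D i v). Proof. by case: HW => _ _ _ h _; apply: h. Qed.
Lemma DXc i j v : D i (X j v) = X j (D i v) + (if i == j then v else 0).
Proof. by case: HW => _ _ _ _ /(_ i j v) <-; rewrite addrC subrK. Qed.
Lemma GXd i d v : G d v -> G (d + 1) (X i v). Proof. by case: HA => h _; apply: h. Qed.
Lemma GDd i d v : G d v -> G (d - 1) (D i v). Proof. by case: HA => _ h; apply: h. Qed.

Notation E := (euler X D).
Lemma LE : linear E.
Proof. rewrite /euler; apply: lin_sum => i; apply: lin_comp; [exact: LX | exact: LD]. Qed.
Lemma GE d v : G d v -> G d (E v).
Proof. by move=> h; apply: Gsum => i _; rewrite -[d](subrK 1); apply: GXd; apply: GDd. Qed.

Lemma intr_neq0 (d : int) : d != 0 -> d%:~R != 0 :> K.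
Proof.
have c0 := (pcharf0P K).1 Hch.
case: d => k; last first.
  move=> _; rewrite NegzE mulrNz oppr_eq0 -pmulrn; change (~~ (k.+1%:R == 0 :> K)).
  by rewrite c0.
rewrite -pmulrn => h; change (~~ (k%:R == 0 :> K)); rewrite c0.
by case: k h.
Qed.

Hypothesis HE : gen_eulerian X D G.

Lemma euler_inv d z : d != 0 -> G d z -> exists w, G d w /\ z = E w.
Proof.
move=> d0 Gz.
pose f w := E w - d%:~R *: w.
have step : forall a, exists w, G d w /\ iter a f z = (- d%:~R) ^+ a *: z + E w.
  elim=> [|a [w [Gw IH]]].
    by exists 0; split; [exact: G0 | rewrite expr0 scale1r (lin0 LE) addr0].
  exists ((- d%:~R) ^+ a *: z + E w - d%:~R *: w); split.
    by apply: GB; [apply: GD; [apply: GZ | apply: GE] | apply: GZ].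
  rewrite iterS IH /f (linB LE) (linD LE) (linZ LE) exprSr -scalerA.
  rewrite scalerDr scaleNr.
  set A := E z; set B := E (E w); set C := E w; set c := (- d%:~R) ^+ a.
  rewrite scalerA [d%:~R * c]mulrC -scalerA.
  by rewrite opprD scalerN addrCA.

have [a [a0 Ha]] := HE _ _ Gz.
have [w [Gw Hw]] := step a.
have ne : (- d%:~R) ^+ a != 0 :> K by rewrite expf_neq0 // oppr_eq0 intr_neq0.
exists (- ((- d%:~R) ^+ a)^-1 *: w); split; first by apply: GZ.
have : (- d%:~R) ^+ a *: z + E w = 0 by rewrite -Hw; exact: Ha.
move=> /eqP; rewrite addr_eq0 => /eqP h.
by rewrite (linZ LE) scaleNr -scalerN -h scalerA mulVf // scale1r.
Qed.


Definition F (r : seq 'I_n) (al : {ffun 'I_n -> nat}) (v : M) : M :=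
  foldr (fun i w => iter (al i) (X i) w) v r.
Definition add1 (al : {ffun 'I_n -> nat}) i : {ffun 'I_n -> nat} :=
  [ffun j => (al j + (j == i))%N].
Definition sub1 (al : {ffun 'I_n -> nat}) i : {ffun 'I_n -> nat} :=
  [ffun j => (al j - (j == i))%N].
Definition deg (al : {ffun 'I_n -> nat}) : nat := (\sum_(j <- enum 'I_n) al j)%N.

Lemma xmonoE al v : xmono X al v = F (enum 'I_n) al v. Proof. by []. Qed.

Lemma LF r (al : {ffun 'I_n -> nat}) : linear (F r al).
Proof.
elim: r => [|i r IH]; first exact: lin_id.
change (linear (iter (al i) (X i) \o F r al)).
apply: lin_comp IH; exact: lin_iter (LX i).
Qed.

Lemma Giter i a d v : G d v -> G (d + a%:Z) (iter a (X i) v).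
Proof.
move=> Gv; elim: a => [|a IH]; first by rewrite addr0.
by rewrite iterS -[a.+1]addn1 PoszD addrA; apply: GXd.
Qed.

Lemma GF r (al : {ffun 'I_n -> nat}) d v : G d v -> G (d + (\sum_(j <- r) al j)%N%:Z) (F r al v).
Proof.
move=> Gv; elim: r => [|i r IH] /=; first by rewrite big_nil addr0.
by rewrite big_cons PoszD addrCA addrC; apply: Giter.
Qed.

Lemma F_eq_in r (al be : {ffun 'I_n -> nat}) v : (forall j, j \in r -> al j = be j) -> F r al v = F r be v.
Proof.
elim: r => [|i r IH] //= h.
by rewrite h ?mem_head // IH // => j jr; rewrite h // inE jr orbT.
Qed.

Lemma F_zero r (al : {ffun 'I_n -> nat}) v : (forall j, j \in r -> al j = 0%N) -> F r al v = v.
Proof.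
elim: r => [|i r IH] //= h.
by rewrite h ?mem_head //= IH // => j jr; rewrite h // inE jr orbT.
Qed.

Lemma X_iter i j a w : X i (iter a (X j) w) = iter a (X j) (X i w).
Proof. by elim: a => [|a IH] //=; rewrite XXc IH. Qed.

Lemma D_iter_ne i j a w : i != j -> D i (iter a (X j) w) = iter a (X j) (D i w).
Proof.
move=> /negbTE ne; elim: a => [|a IH] //=.
by rewrite DXc ne addr0 IH.
Qed.

Lemma D_iter i a w :
  D i (iter a (X i) w) = iter a (X i) (D i w) + a%:R *: iter a.-1 (X i) w.
Proof.
elim: a => [|a IH] /=; first by rewrite scale0r addr0.
rewrite DXc eqxx IH (linD (LX i)) (linZ (LX i)) -addrA; congr (_ + _).
case: a {IH} => [|a] /=; first by rewrite scale0r add0r scale1r.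
by rewrite [a.+2%:R]mulrSr scalerDl scale1r.
Qed.

Lemma X_F r (al : {ffun 'I_n -> nat}) i v : uniq r ->
  X i (F r al v) = if i \in r then F r (add1 al i) v else F r al (X i v).
Proof.
elim: r => [|j r IH] //= /andP[jr ur].
rewrite inE X_iter; case: eqP => [ij|/eqP ne] /=.
  subst j.
  rewrite -X_iter -iterS ffunE eqxx addn1 (F_eq_in r (add1 al i) al) // => k kr.
  rewrite ffunE; case: eqP => [ki|]; last by rewrite addn0.
  by move: jr; rewrite -ki kr.
rewrite IH // ffunE eq_sym (negbTE ne) addn0.
by case: (i \in r).
Qed.


Lemma LXi j a : linear (iter a (X j)). Proof. exact: lin_iter (LX j). Qed.

Lemma D_F r (al : {ffun 'I_n -> nat}) i v : uniq r ->
  D i (F r al v) = F r al (D i v) +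
    (if i \in r then (al i)%:R *: F r (sub1 al i) v else 0).
Proof.
elim: r => [|j r IH] /=; first by rewrite addr0.
move=> /andP[jr ur]; rewrite inE; case: eqP => [ij|/eqP ne] /=.
  subst j; rewrite D_iter IH // (negbTE jr) addr0 ffunE eqxx subn1.
  rewrite (F_eq_in r (sub1 al i) al) // => k kr.
  rewrite ffunE; case: eqP => [ki|]; last by rewrite subn0.
  by move: jr; rewrite -ki kr.
rewrite D_iter_ne // IH // (linD (LXi _ _)).
case: (i \in r); last by rewrite (lin0 (LXi _ _)).
by rewrite (linZ (LXi _ _)) ffunE eq_sym (negbTE ne) subn0.
Qed.



Definition Pr (Q : int -> M -> Prop) v := exists t : seq (int * M),
  v = \sum_(x <- t) x.2 /\ forall x, x \in t -> G x.1 x.2 /\ Q x.1 x.2.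

Section PrQ.
Variable Q : int -> M -> Prop.
Hypothesis QZ : forall d a w, G d w -> Q d w -> Q d (a *: w).
Hypothesis QX : forall i d w, G d w -> Q d w -> Q (d + 1) (X i w).

Lemma Pr0 : Pr Q 0. Proof. by exists [::]; rewrite big_nil. Qed.
Lemma PrD u v : Pr Q u -> Pr Q v -> Pr Q (u + v).
Proof.
move=> [t1 [-> h1]] [t2 [-> h2]]; exists (t1 ++ t2); rewrite big_cat; split=> // x.
by rewrite mem_cat => /orP[/h1|/h2].
Qed.
Lemma PrZ a v : Pr Q v -> Pr Q (a *: v).
Proof.
move=> [t [-> h]]; exists [seq (x.1, a *: x.2) | x <- t]; split.
  by rewrite big_map scaler_sumr.
move=> _ /mapP[x xt ->] /=; have [G1 Q1] := h x xt; split; [exact: GZ | exact: QZ].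
Qed.
Lemma PrX i v : Pr Q v -> Pr Q (X i v).
Proof.
move=> [t [-> h]]; exists [seq (x.1 + 1, X i x.2) | x <- t]; split.
  by rewrite big_map (linS (LX i)).
move=> _ /mapP[x xt ->] /=; have [G1 Q1] := h x xt; split; [exact: GXd | exact: QX].
Qed.
Lemma PrS (I : Type) (r : seq I) (P : pred I) (f : I -> M) :
  (forall i, P i -> Pr Q (f i)) -> Pr Q (\sum_(i <- r | P i) f i).
Proof. by move=> h; apply: big_ind => //; [exact: Pr0 | exact: PrD]. Qed.
Lemma PrF r al v : Pr Q v -> Pr Q (F r al v).
Proof.
move=> h; elim: r => [|i r IH] //=.
by elim: (al i) => [|a IHa] //=; apply: PrX.
Qed.
Lemma Pr_span m (g : 'I_m -> M) v : (forall j, Pr Q (g j)) -> in_Rspan X g v -> Pr Q v.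
Proof.
move=> hg [s [c ->]]; apply: PrS => k _; apply: PrZ; rewrite xmonoE; exact: PrF.
Qed.
End PrQ.

Lemma Pr_mono (Q Q' : int -> M -> Prop) v :
  (forall d w, G d w -> Q d w -> Q' d w) -> Pr Q v -> Pr Q' v.
Proof.
move=> hQ [t [-> h]]; exists t; split=> // x xt; have [G1 Q1] := h x xt; split=> //.
exact: hQ.
Qed.

Lemma lowbound (s : seq int) : exists L : int, forall d, d \in s -> L <= d.
Proof.
elim: s => [|d s [L hL]]; first by exists 0.
exists (if d <= L then d else L) => e; rewrite inE => /orP[/eqP ->|/hL].
  by case: ifP => //; lia.
by case: ifP => //; lia.
Qed.

Lemma Pr_dec v : exists L, Pr (fun d _ => L <= d) v.
Proof.
case: HG => _ _ _ /(_ v) [s [z [hz ->]]] _.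
have [L hL] := lowbound s; exists L; exists [seq (d, z d) | d <- s]; split.
  by rewrite big_map.
by move=> _ /mapP[d ds ->] /=; split; [exact: hz | exact: hL].
Qed.

Hypothesis HF : fin_gen_R X.

Lemma bounded : exists L, forall d z, d < L -> G d z -> z = 0.
Proof.
case: HF => m [g hg].
have [L hL] : exists L, forall j, j \in enum 'I_m -> Pr (fun d _ => L <= d) (g j).
  elim: (enum 'I_m) => [|j r [L hL]]; first by exists 0.
  have [L' hL'] := Pr_dec (g j).
  exists (if L <= L' then L else L') => k; rewrite inE => /orP[/eqP ->|/hL].
    by apply: Pr_mono hL' => d w _ /=; case: ifP; lia.
  by apply: Pr_mono => d w _ /=; case: ifP; lia.
exists L => d z dL Gz.
have : Pr (fun d _ => L <= d) z.
  have QZ : forall e (a : K) (w : M), G e w -> L <= e -> L <= e by [].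
  have QX : forall (i : 'I_n) e (w : M), G e w -> L <= e -> L <= e + 1.
    by move=> *; lia.
  apply: (Pr_span _ QZ QX _ _ _ _ (hg z)) => j.
  by apply: hL; rewrite mem_enum.
move=> [t [zE ht]].
have ht' : forall x, x \in t -> G x.1 x.2 by move=> x /ht[].
rewrite (proj _ _ _ ht' Gz zE) big1_seq // => x /andP[/eqP x1 xt].
by have [_] := ht x xt; rewrite x1; lia.
Qed.

Lemma neg_zero d z : d < 0 -> G d z -> z = 0.
Proof.
have [L hL] := bounded.
suff : forall N : nat, forall d z, d < L + N%:Z -> d < 0 -> G d z -> z = 0.
  by move=> /(_ (absz L) d z) h d0; apply: h => //; lia.
elim=> [|N IH] {}d {}z dL d0 Gz; first by apply: (hL d) => //; lia.
have [w [Gw ->]] := euler_inv d z ltac:(lia) Gz.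
rewrite /euler big1 // => i _.
rewrite (IH (d - 1) (D i w)); [exact: (lin0 (LX i)) | lia | lia | exact: GDd].
Qed.


Definition KSpan (H : seq M) v := exists t : seq (K * M),
  v = \sum_(x <- t) x.1 *: x.2 /\ forall x, x \in t -> x.2 \in H.

Lemma KS0 H : KSpan H 0. Proof. by exists [::]; rewrite big_nil. Qed.
Lemma KSD H u v : KSpan H u -> KSpan H v -> KSpan H (u + v).
Proof.
move=> [t1 [-> h1]] [t2 [-> h2]]; exists (t1 ++ t2); rewrite big_cat; split=> // x.
by rewrite mem_cat => /orP[/h1|/h2].
Qed.
Lemma KSZ H a v : KSpan H v -> KSpan H (a *: v).
Proof.
move=> [t [-> h]]; exists [seq (a * x.1, x.2) | x <- t]; split.
  by rewrite big_map scaler_sumr; apply: eq_bigr => x _; rewrite scalerA.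
move=> y /mapP[x xt ->] /=; exact: h x xt.
Qed.
Lemma KSS H (I : Type) (r : seq I) (P : pred I) (f : I -> M) :
  (forall i, P i -> KSpan H (f i)) -> KSpan H (\sum_(i <- r | P i) f i).
Proof. by move=> h; apply: big_ind => //; [exact: KS0 | exact: KSD]. Qed.
Lemma KS_mono H H' v : {subset H <= H'} -> KSpan H v -> KSpan H' v.
Proof. by move=> sH [t [-> h]]; exists t; split=> // x /h /sH. Qed.
Lemma KS_mem H h : h \in H -> KSpan H h.
Proof. by move=> hH; exists [:: (1, h)]; rewrite big_seq1 scale1r; split=> // x; rewrite inE => /eqP ->. Qed.

Definition Q2 H (d : int) (w : M) := 0 <= d /\ (d = 0 -> KSpan H w).

Lemma Pr_dec2 v : exists H, (forall h, h \in H -> G 0 h) /\ Pr (Q2 H) v.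
Proof.
case: HG => _ _ _ /(_ v) [s [zf [hz ->]]] _.
exists [seq zf d | d <- s & d == 0]; split.
  by move=> h /mapP[d]; rewrite mem_filter => /andP[/eqP <- ds] ->; exact: hz.
exists [seq (d, zf d) | d <- s & 0 <= d]; split.
  rewrite big_map big_filter [RHS]big_mkcond /= big_seq [RHS]big_seq.
  apply: eq_bigr => d ds; case: ifP => // /negbT d0.
  by apply: (neg_zero d); [lia | exact: hz].
move=> y /mapP[d]; rewrite mem_filter => /andP[d0 ds] -> /=; split; first exact: hz.
split=> // d00; apply: KS_mem; apply: map_f; rewrite mem_filter ds andbT d00 //.
Qed.

Lemma span0 : exists H0 : seq M, (forall h, h \in H0 -> G 0 h) /\
  forall z, G 0 z -> KSpan H0 z.
Proof.
case: HF => m [g hg].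
have [H [GH hH]] : exists H, (forall h, h \in H -> G 0 h) /\
    forall j, j \in enum 'I_m -> Pr (Q2 H) (g j).
  elim: (enum 'I_m) => [|j r [H [GH hH]]]; first by exists [::].
  have [H' [GH' hH']] := Pr_dec2 (g j).
  exists (H ++ H'); split.
    by move=> h; rewrite mem_cat => /orP[/GH|/GH'].
  move=> k; rewrite inE => /orP[/eqP ->|/hH].
    apply: Pr_mono hH' => d w _ [d0 h]; split=> // /h; apply: KS_mono.
    by move=> x xH; rewrite mem_cat xH orbT.
  apply: Pr_mono => d w _ [d0 h]; split=> // /h; apply: KS_mono.
  by move=> x xH; rewrite mem_cat xH.
exists H; split=> // z Gz.
have QZ : forall e (a : K) (w : M), G e w -> Q2 H e w -> Q2 H e (a *: w).
  by move=> e a w _ [e0 h]; split=> // /h; exact: KSZ.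
have QX : forall (i : 'I_n) e (w : M), G e w -> Q2 H e w -> Q2 H (e + 1) (X i w).
  by move=> i e w _ [e0 h]; split; [lia | move=> *; exfalso; lia].
have : Pr (Q2 H) z.
  by apply: (Pr_span _ QZ QX _ _ _ _ (hg z)) => j; apply: hH; rewrite mem_enum.
move=> [t [zE ht]].
have ht' : forall x, x \in t -> G x.1 x.2 by move=> x /ht[].
rewrite (proj _ _ _ ht' Gz zE) big_seq_cond; apply: KSS => x /andP[xt /eqP x0].
by have [_ [_]] := ht x xt; apply.
Qed.


Definition Espan m (e : 'I_m -> M) v := exists c : 'I_m -> K, v = \sum_j c j *: e j.
Definition freeF m (e : 'I_m -> M) :=
  forall c : 'I_m -> K, \sum_j c j *: e j = 0 -> forall j, c j = 0.

Arguments Espan {m}.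
Arguments freeF {m}.

Lemma ES0 m (e : 'I_m -> M) : Espan e 0.
Proof. by exists (fun _ => 0); rewrite big1 // => j _; rewrite scale0r. Qed.
Lemma ESD m (e : 'I_m -> M) u v : Espan e u -> Espan e v -> Espan e (u + v).
Proof.
move=> [c1 ->] [c2 ->]; exists (fun j => c1 j + c2 j); rewrite -big_split.
by apply: eq_bigr => j _; rewrite scalerDl.
Qed.
Lemma ESZ m (e : 'I_m -> M) a v : Espan e v -> Espan e (a *: v).
Proof.
move=> [c ->]; exists (fun j => a * c j); rewrite scaler_sumr.
by apply: eq_bigr => j _; rewrite scalerA.
Qed.
Lemma KS_ES m (e : 'I_m -> M) H v :
  (forall h, h \in H -> Espan e h) -> KSpan H v -> Espan e v.
Proof.
move=> hH [t [-> ht]]; rewrite big_seq.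
apply: big_ind; [exact: ES0 | exact: ESD |].
by move=> x xt; apply: ESZ; exact: hH (ht x xt).
Qed.

Lemma extract (H : seq M) : (forall h, h \in H -> G 0 h) ->
  exists m (e : 'I_m -> M), (forall j, G 0 (e j)) /\ freeF e /\
    forall h, h \in H -> Espan e h.
Proof.
elim: H => [|h H IH] GH.
  exists 0, (fun _ => 0); split; [move=> j; exact: G0 | split=> //].
  by move=> c _ [].
have [m [e [Ge [fe he]]]] : exists m (e : 'I_m -> M), (forall j, G 0 (e j)) /\
    freeF e /\ forall h, h \in H -> Espan e h.
  by apply: IH => x xH; apply: GH; rewrite inE xH orbT.
case: (classic (Espan e h)) => hh.
  exists m, e; split=> //; split=> // x; rewrite inE => /orP[/eqP -> //|]; exact: he.
pose e' (j : 'I_m.+1) := if unlift ord0 j is Some k then e k else h.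
have e'0 : e' ord0 = h by rewrite /e' unlift_none.
have e'l : forall k, e' (lift ord0 k) = e k by move=> k; rewrite /e' liftK.
exists m.+1, e'; split.
  move=> j; rewrite /e'; case: (unlift ord0 j) => [k|]; first exact: Ge.
  by apply: GH; rewrite mem_head.
split.
  move=> c; rewrite big_ord_recl e'0.
  under eq_bigr do rewrite e'l.
  move=> hc.
  have c0 : c ord0 = 0.
    apply/eqP; apply/negPn/negP => nz; apply: hh.
    exists (fun k => - ((c ord0)^-1 * c (lift ord0 k))).
    move/(congr1 (fun x => (c ord0)^-1 *: x)): hc.
    rewrite scaler0 scalerDr scalerA mulVf // scale1r => /eqP.
    rewrite addr_eq0 => /eqP ->; rewrite scaler_sumr -sumrN.
    by apply: eq_bigr => k _; rewrite scalerA scaleNr.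
  move: hc; rewrite c0 scale0r add0r => /fe hk j.
  by case: (unliftP ord0 j) => [k ->|->]; [exact: hk|].
move=> x; rewrite inE => /orP[/eqP ->|/he [c ->]].
  exists (fun j => if unlift ord0 j is Some _ then 0 else 1).
  rewrite big_ord_recl unlift_none scale1r e'0 big1 ?addr0 // => k _.
  by rewrite liftK scale0r.
exists (fun j => if unlift ord0 j is Some k then c k else 0).
rewrite big_ord_recl unlift_none scale0r add0r.
by apply: eq_bigr => k _; rewrite liftK e'l.
Qed.


Section Basis.
Variables (m : nat) (e : 'I_m -> M).
Hypotheses (Ge : forall j, G 0 (e j)) (fe : freeF e)
  (se : forall z, G 0 z -> Espan e z).

Lemma De i j : D i (e j) = 0.
Proof. by apply: (neg_zero (0 - 1)) => //; apply: GDd. Qed.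

Definition Sp v := exists t : seq (({ffun 'I_n -> nat} * 'I_m) * K),
  v = \sum_(x <- t) x.2 *: xmono X x.1.1 (e x.1.2).

Lemma Sp0 : Sp 0. Proof. by exists [::]; rewrite big_nil. Qed.
Lemma SpD u v : Sp u -> Sp v -> Sp (u + v).
Proof. by move=> [t1 ->] [t2 ->]; exists (t1 ++ t2); rewrite big_cat. Qed.
Lemma SpZ a v : Sp v -> Sp (a *: v).
Proof.
move=> [t ->]; exists [seq (x.1, a * x.2) | x <- t].
by rewrite big_map scaler_sumr; apply: eq_bigr => x _; rewrite scalerA.
Qed.
Lemma SpS (I : Type) (r : seq I) (P : pred I) (f : I -> M) :
  (forall i, P i -> Sp (f i)) -> Sp (\sum_(i <- r | P i) f i).
Proof. by move=> h; apply: big_ind => //; [exact: Sp0 | exact: SpD]. Qed.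
Lemma X_xmono i al v : X i (xmono X al v) = xmono X (add1 al i) v.
Proof. by rewrite !xmonoE X_F ?enum_uniq // mem_enum. Qed.
Lemma SpX i v : Sp v -> Sp (X i v).
Proof.
move=> [t ->]; exists [seq ((add1 x.1.1 i, x.1.2), x.2) | x <- t].
rewrite big_map (linS (LX i)); apply: eq_bigr => x _ /=.
by rewrite (linZ (LX i)) X_xmono.
Qed.
Lemma Sp_e j : Sp (e j).
Proof.
exists [:: (([ffun _ => 0%N], j), 1)]; rewrite big_seq1 scale1r /=.
by rewrite xmonoE F_zero // => k _; rewrite ffunE.
Qed.

Lemma Sp_deg (N : nat) z : G N%:Z z -> Sp z.
Proof.
elim: N z => [|N IH] z Gz.
  have [c ->] := se z Gz; apply: SpS => j _; apply: SpZ; exact: Sp_e.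
have [w [Gw ->]] := euler_inv N.+1%:Z z isT Gz.
rewrite /euler; apply: SpS => i _; apply: SpX; apply: IH.
have -> : N%:Z = N.+1%:Z - 1 by lia.
exact: GDd.
Qed.

Lemma Sp_all v : Sp v.
Proof.
case: HG => _ _ _ /(_ v) [s [zf [hz ->]]] _.
rewrite big_seq; apply: SpS => d ds.
case: (ltrP d 0) => d0.
  by rewrite (neg_zero d (zf d) d0 (hz d ds)); exact: Sp0.
apply: (Sp_deg (absz d)); rewrite gez0_abs //; exact: hz.
Qed.

Lemma Sp_Rspan v : Sp v -> in_Rspan X e v.
Proof.
move=> [t ->].
exists (undup [seq x.1 | x <- t]), (fun k => \sum_(x <- t | x.1 == k) x.2).
set S := undup _.
transitivity (\sum_(k <- S) \sum_(x <- t | x.1 == k) x.2 *: xmono X x.1.1 (e x.1.2)).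
  rewrite sum_partition ?undup_uniq // => x xt.
  by rewrite mem_undup map_f.
apply: eq_bigr => k _; rewrite scaler_suml; apply: eq_bigr => x /eqP -> //.
Qed.

Lemma D_xmono i (al : {ffun 'I_n -> nat}) j : D i (xmono X al (e j)) = (al i)%:R *: xmono X (sub1 al i) (e j).
Proof. by rewrite !xmonoE D_F ?enum_uniq // mem_enum De (lin0 (LF _ _)) add0r. Qed.

Lemma deg_le (al : {ffun 'I_n -> nat}) i : (al i <= deg al)%N.
Proof. by rewrite /deg (bigD1_seq i) ?mem_enum ?enum_uniq //= leq_addr. Qed.

Lemma deg_sub1 (al : {ffun 'I_n -> nat}) i : (0 < al i)%N -> deg (sub1 al i) = (deg al).-1.
Proof.
move=> ai; rewrite /deg !(bigD1_seq i) ?mem_enum ?enum_uniq //= ffunE eqxx.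
rewrite (eq_bigr (fun j => al j)); first by move: ai; rewrite /=; lia.
by move=> j /negbTE ji; rewrite ffunE ji subn0.
Qed.

Lemma deg_pos (al : {ffun 'I_n -> nat}) : (0 < deg al)%N -> exists i, (0 < al i)%N.
Proof.
move=> dp; apply/not_all_not_ex => h; move: dp; rewrite /deg big1_seq //.
by move=> j _; move: (h j); case: (al j).
Qed.

Lemma add1_sub1 (al : {ffun 'I_n -> nat}) i : (0 < al i)%N -> add1 (sub1 al i) i = al.
Proof.
by move=> ai; apply/ffunP => j; rewrite !ffunE; case: eqP => [->|] /=; lia.
Qed.

Lemma natr_neq0 (k : nat) : (0 < k)%N -> k%:R != 0 :> K.
Proof. by move=> kp; rewrite ((pcharf0P K).1 Hch); case: k kp. Qed.

Lemma indepN (N : nat) : forall (s : seq ({ffun 'I_n -> nat} * 'I_m))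
  (c : {ffun 'I_n -> nat} * 'I_m -> K), uniq s ->
  (forall k, k \in s -> deg k.1 = N) ->
  \sum_(k <- s) c k *: xmono X k.1 (e k.2) = 0 -> forall k, k \in s -> c k = 0.
Proof.
elim: N => [|N IH] s c us hdeg hrel [al0 j0] k0s.
  have al00 : forall k, k \in s -> forall i, k.1 i = 0%N.
    by move=> k ks i; have := deg_le k.1 i; rewrite hdeg // leqn0 => /eqP.
  pose c2 j := \sum_(k <- s | k.2 == j) c k.
  have : \sum_j c2 j *: e j = 0.
    rewrite -[RHS]hrel.
    transitivity (\sum_j \sum_(k <- s | k.2 == j) c k *: e k.2).
      apply: eq_bigr => j _; rewrite scaler_suml.
      by apply: eq_bigr => k /eqP ->.
    rewrite (@sum_partition _ _ _ s snd) ?index_enum_uniq //; last first.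
      by move=> x _; rewrite mem_index_enum.
    rewrite big_seq [RHS]big_seq; apply: eq_bigr => k ks.
    by rewrite xmonoE F_zero // => i _; exact: al00.
  move/fe => /(_ j0); rewrite /c2 big_mkcond (bigD1_seq (al0, j0)) //= eqxx.
  rewrite big_seq_cond big1 ?addr0 // => k /andP[ks nk].
  case: eqP => // k2; case/negP: nk; apply/eqP.
  move: k ks k2 => [al j] ks /= ->; congr pair; apply/ffunP => i.
  by rewrite (al00 _ ks) (al00 _ k0s).
have [i ipos] : exists i, (0 < al0 i)%N by apply: deg_pos; rewrite (hdeg _ k0s).
pose s' := [seq (sub1 k.1 i, k.2) | k : {ffun 'I_n -> nat} * 'I_m <- s & (0 < k.1 i)%N].
pose c' (p : {ffun 'I_n -> nat} * 'I_m) := c (add1 p.1 i, p.2) * (p.1 i).+1%:R.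
have hrel' : \sum_(p <- s') c' p *: xmono X p.1 (e p.2) = 0.
  have hD := congr1 (D i) hrel; rewrite (linS (LD i)) (lin0 (LD i)) in hD.
  rewrite -[RHS]hD.
  rewrite big_map big_filter big_mkcond /=; apply: eq_bigr => -[al j] _ /=.
  rewrite (linZ (LD i)) D_xmono scalerA; case: (ltnP 0 (al i)) => hi.
    by rewrite /c' /= add1_sub1 // ffunE eqxx /= subn1 prednK.
  by move: hi; rewrite leqn0 => /eqP ->; rewrite mulr0 scale0r.
have us' : uniq s'.
  rewrite map_inj_in_uniq ?filter_uniq // => -[a j] [b j'].
  rewrite !mem_filter /= => /andP[ha _] /andP[hb _] [hab ->].
  by rewrite -(add1_sub1 a i ha) hab (add1_sub1 b i hb).
have hdeg' : forall p, p \in s' -> deg p.1 = N.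
  move=> p /mapP[[a j]]; rewrite mem_filter /= => /andP[ha hs] ->.
  by rewrite deg_sub1 // (hdeg _ hs).
have mem' : (sub1 al0 i, j0) \in s'.
  by apply: (map_f (fun k => (sub1 k.1 i, k.2)) (x := (al0, j0))); rewrite mem_filter ipos.
have := IH s' c' us' hdeg' hrel' _ mem'.
rewrite /c' /= add1_sub1 // ffunE eqxx /= subn1 prednK // => /eqP.
rewrite mulf_eq0 => /orP[/eqP //|]; by rewrite (negbTE (natr_neq0 _ ipos)).
Qed.

Lemma indep (s : seq ({ffun 'I_n -> nat} * 'I_m))
  (c : {ffun 'I_n -> nat} * 'I_m -> K) : uniq s ->
  \sum_(k <- s) c k *: xmono X k.1 (e k.2) = 0 -> forall k, k \in s -> c k = 0.
Proof.
move=> us hrel k0 k0s.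
pose t := [seq ((deg k.1)%:Z, c k *: xmono X k.1 (e k.2)) | k <- s].
have Gt : forall x, x \in t -> G x.1 x.2.
  move=> x /mapP[k ks ->] /=; apply: GZ; rewrite xmonoE.
  by have := GF (enum 'I_n) k.1 _ _ (Ge k.2); rewrite add0r.
have zE : (0 : M) = \sum_(x <- t) x.2 by rewrite big_map hrel.
have := proj _ _ _ Gt (G0 (deg k0.1)%:Z) zE.
rewrite big_map -big_filter => h0.
apply: (indepN (deg k0.1) _ c _ _ (esym h0)).
- exact: filter_uniq.
- by move=> k; rewrite mem_filter => /andP[/eqP [] ->].
- by rewrite mem_filter eqxx.
Qed.

End Basis.

Lemma main_sec : (forall v : M, v = 0) \/
  exists m (e : 'I_m -> M), (0 < m)%N /\ (forall j, G 0 (e j)) /\ R_basis X e.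
Proof.
have [H0 [GH0 hH0]] := span0.
have [m [e [Ge [fe he]]]] := extract H0 GH0.
have se : forall z, G 0 z -> Espan e z.
  by move=> z Gz; apply: (KS_ES _ _ _ _ he); exact: hH0.
have span : forall v, in_Rspan X e v.
  by move=> v; apply: Sp_Rspan; apply: Sp_all.
case: m e Ge fe he se span => [|m] e Ge fe he se span.
  left=> v; have [s [c ->]] := span v.
  by case: s => [|k s]; [rewrite big_nil | case: k.2].
right; exists m.+1, e; split=> //; split=> //; split=> //.
exact: indep.
Qed.

End Main.

Theorem mainTheorem11 (K : fieldType) (n : nat) (M : lmodType K)
    (X D : 'I_n -> M -> M) (G : int -> M -> Prop) :
  [pchar K] =i pred0 ->
  weyl_action X D -> graded G -> graded_action X D G ->
  gen_eulerian X D G -> fin_gen_R X ->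
  (forall v : M, v = 0) \/
  exists (m : nat) (e : 'I_m -> M),
    (0 < m)%N /\ (forall j, G 0 (e j)) /\ R_basis X e.
Proof. move=> H1 H2 H3 H4 H5 H6; exact: (main_sec _ _ _ _ _ _ H1 H2 H3 H4 H5 H6). Qed.
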